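(* Let $r\ge 3$ and $1\le \ell\le r-2$, let $G(r,\ell)$ be the graph obtained from $K_r\circ K_1$ by deleting $r-\ell$ leaves, and let $L$ denote the set of leaves of $G(r,\ell)$. Then $T\subseteq V(G(r,\ell))$ is a $\gamma_P$-irrelevant set of $G(r,\ell)$ if and only if $T\subseteq L$.
   Context: $K_r\circ K_1$ is the corona: $K_r$ with one pendant leaf attached to each vertex. Zero forcing: starting with a set $S$ of blue vertices, a blue vertex $v$ may turn blue a white vertex $w$ if $w$ is the only white neighbor of $v$; $S$ is a zero forcing set if repeated application colors all vertices blue. A set $S\subseteq V(G)$ is a power dominating set if its closed neighborhood $N[S]=\bigcup_{x\in S}(\{x\}\cup N(x))$ is a zero forcing set of $G$. A vertex is $\gamma_P$-irrelevant if it belongs to no minimal (under inclusion) power dominating set; a set is $\gamma_P$-irrelevant if all its vertices are. *)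

(* Defs.v *)
From mathcomp Require Import all_boot.
Set Implicit Arguments. Unset Strict Implicit. Unset Printing Implicit Defensive.

Section Graph.
Variables (T : finType) (adj : rel T).

Definition nbhd (v : T) : {set T} := [set w | adj v w].

Definition cnbhd (S : {set T}) : {set T} :=
  S :|: [set w | [exists x in S, adj x w]].

Definition force_step (B : {set T}) : {set T} :=
  B :|: [set w | [exists v in B, (nbhd v :\: B) == [set w]]].

Definition zero_forcing (S : {set T}) : Prop :=
  exists n, iter n force_step S = [set: T].

Definition power_dominating (S : {set T}) : Prop := zero_forcing (cnbhd S).

Definition minimal_pds (S : {set T}) : Prop :=
  power_dominating S /\ forall S' : {set T}, S' \proper S -> ~ power_dominating S'.

Definition gammaP_irrelevant_vertex (v : T) : Prop :=
  forall S : {set T}, minimal_pds S -> v \notin S.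

Definition gammaP_irrelevant_set (X : {set T}) : Prop :=
  forall v, v \in X -> gammaP_irrelevant_vertex v.
End Graph.

(* G(r,l): K_r o K_1 with r - l leaves deleted.  Vertices: inl i (i < r) are
   the clique vertices, inr j (j < l) are the remaining leaves, leaf inr j
   being attached to clique vertex inl j. *)
Definition Gvert (r l : nat) : finType := ('I_r + 'I_l)%type.

Definition Gadj (r l : nat) : rel (Gvert r l) :=
  fun x y =>
    match x, y with
    | inl i, inl j => i != j
    | inl i, inr j => nat_of_ord i == nat_of_ord j
    | inr j, inl i => nat_of_ord i == nat_of_ord j
    | inr _, inr _ => false
    end.

Definition Gleaves (r l : nat) : {set Gvert r l} := [set x | if x is inr _ then true else false].

(* Main.v *)
Require Import Defs.
From mathcomp Require Import all_boot.
From mathcomp Require Import zify.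

Section Mono.
Variables (T : finType) (adj : rel T).

Lemma force_step_mono (B B' : {set T}) : B \subset B' ->
  force_step adj B \subset force_step adj B'.
Proof.
move=> sub; apply/subsetP => w; rewrite !inE => /orP [wB|].
  by rewrite (subsetP sub _ wB).
case/existsP => v /andP [vB /eqP E].
case wB': (w \in B') => //=.
apply/existsP; exists v; rewrite (subsetP sub _ vB) /=.
have wn: w \in nbhd adj v :\: B by rewrite E inE.
apply/eqP/setP => x; rewrite !inE.
case: (eqVneq x w) => [->|ne]; first by rewrite wB'; move: wn; rewrite !inE => /andP [].
apply/negP => /andP [xB' xv].
have : x \in nbhd adj v :\: B.
  by rewrite !inE xv andbT; apply/negP => xB; rewrite (subsetP sub _ xB) in xB'.
by rewrite E inE (negbTE ne).
Qed.

Lemma iter_mono n (B B' : {set T}) : B \subset B' ->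
  iter n (force_step adj) B \subset iter n (force_step adj) B'.
Proof. by move=> s; elim: n => //= n IH; apply: force_step_mono. Qed.

Lemma iter_sub n (B : {set T}) : B \subset iter n (force_step adj) B.
Proof.
elim: n => //= n IH; apply: subset_trans IH _; apply/subsetP => x; rewrite inE => ->.
done.
Qed.
End Mono.

Section G.
Variables (r l : nat) (hr : 3 <= r) (hl1 : 1 <= l) (hl2 : l <= r - 2).

Let V := Gvert r l.

Lemma clique_pds (S : {set V}) (i : 'I_r) : inl i \in S ->
  power_dominating (@Gadj r l) S.
Proof.
move=> iS; exists 1 => /=.
apply/eqP; rewrite eqEsubset subsetT /=; apply/subsetP => x _.
have D : forall k : 'I_r, inl k \in cnbhd (@Gadj r l) S.
  move=> k; rewrite !inE; case: (eqVneq k i) => [->|ne]; first by rewrite iS.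
  apply/orP; right; apply/existsP; exists (inl i); by rewrite iS /= eq_sym.
case: x => [k|j]; rewrite inE ?D //.
case jS: (inr j \in cnbhd (@Gadj r l) S) => //=.
have jr : j < r by have := ltn_ord j; lia.
rewrite inE; apply/existsP; exists (inl (Ordinal jr)); rewrite D /=.
apply/eqP/setP => y; rewrite in_setD in_set1 /nbhd inE.
case: y => [k|j']; first by rewrite D.
rewrite /=; case: (eqVneq j' j) => [->|ne]; first by rewrite jS !eqxx.
have -> : (inr j' == inr j :> V) = false by apply/eqP => -[E]; rewrite E eqxx in ne.
by apply/negbTE; rewrite negb_and; apply/orP; right; rewrite eq_sym.
Qed.

Definition Cset : {set V} := [set x : V | if x is inl i then i < l else true].

Lemma cnbhd_leaves (S : {set V}) : S \subset Gleaves r l ->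
  cnbhd (@Gadj r l) S \subset Cset.
Proof.
move=> sub; apply/subsetP => x; rewrite /cnbhd in_setU => /orP [xS|].
  by move: (subsetP sub _ xS); rewrite !inE; case: x xS.
rewrite inE => /existsP [y /andP [yS a]].
move: (subsetP sub _ yS); rewrite inE.
case: y yS a => // j _; case: x => // i /= /eqP E _.
by rewrite inE E ltn_ord.
Qed.

Lemma Cset_stable : force_step (@Gadj r l) Cset \subset Cset.
Proof.
have r1 : r.-1 < r by lia.
have r2 : r.-2 < r by lia.
apply/subsetP => w; rewrite /force_step in_setU => /orP [//|].
rewrite inE => /existsP [v /andP [vC /eqP E]].
exfalso.
case: v vC E => [i|j] vC E.
  have iC : i < l by move: vC; rewrite inE.
  have a1 : inl (Ordinal r1) \in nbhd (@Gadj r l) (inl i) :\: Cset.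
    rewrite !inE /=; apply/andP; split; first by rewrite -leqNgt; lia.
    by apply/eqP => /(congr1 val) /= ?; lia.
  have a2 : inl (Ordinal r2) \in nbhd (@Gadj r l) (inl i) :\: Cset.
    rewrite !inE /=; apply/andP; split; first by rewrite -leqNgt; lia.
    by apply/eqP => /(congr1 val) /= ?; lia.
  rewrite E !inE in a1 a2.
  move: a2; rewrite -(eqP a1) => /eqP [] ?; lia.
have : w \in nbhd (@Gadj r l) (inr j) :\: Cset by rewrite E inE.
rewrite !inE; case: w E => // i E /andP [].
by move=> H /= /eqP Ei; move: H; rewrite Ei ltn_ord.
Qed.

Lemma leaves_not_pds (S : {set V}) : S \subset Gleaves r l ->
  ~ power_dominating (@Gadj r l) S.
Proof.
move=> sub [n E].
have H : iter n (force_step (@Gadj r l)) Cset \subset Cset.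
  elim: n {E} => //= n IH.
  apply: subset_trans Cset_stable; exact: force_step_mono.
have r1 : r.-1 < r by lia.
have : inl (Ordinal r1) \in iter n (force_step (@Gadj r l)) (cnbhd (@Gadj r l) S).
  by rewrite E inE.
move/(subsetP (@iter_mono _ _ n _ _ (cnbhd_leaves S sub)))/(subsetP H).
rewrite inE /=; lia.
Qed.
End G.


Theorem proposition2p21 (r l : nat) (hr : 3 <= r) (hl1 : 1 <= l) (hl2 : l <= r - 2)
  (X : {set Gvert r l}) :
  gammaP_irrelevant_set (@Gadj r l) X <-> X \subset Gleaves r l.
Proof.
split.
- move=> Hirr; apply/subsetP => x xX; case: x xX => [i|j] xX; last by rewrite inE.
  suff M : minimal_pds (@Gadj r l) [set inl i].
    by have := Hirr _ xX _ M; rewrite in_set1 eqxx.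
  split.
  exact: (@clique_pds r l hr hl1 hl2 [set inl i] i (set11 _)).
  move=> S' /properP [s1 [z zi zS]].
  apply: (@leaves_not_pds r l hr hl1 hl2 S').
  apply/subsetP => y yS; move: (subsetP s1 _ yS) zi; rewrite !in_set1 => /eqP Ey /eqP ez.
  by rewrite ez -Ey yS in zS.
- move=> sub v vX S [pds min]; apply/negP => vS.
  have vL := subsetP sub _ vX.
  have [|y yS yL] := subsetPn (_ : ~~ (S \subset Gleaves r l)).
    by apply/negP => H; exact: (@leaves_not_pds r l hr hl1 hl2 S H pds).
  case: y yS yL => [i|j] yS yL; last by rewrite inE in yL.
  apply: (min (S :\ v)); first exact: properD1.
  apply: (@clique_pds r l hr hl1 hl2 (S :\ v) i); rewrite in_setD1 yS andbT.
  by apply/eqP => E; rewrite -E inE in vL.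
Qed.
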